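(* Suppose Assumptions 1 and 2 hold. Then the modified dual function $g^m(\lambda)=\sum_{i=1}^N g_i^m(\lambda)$, where $g_i^m(\lambda)=\mathcal{L}^r_i(\hat{x}_i(\lambda),\lambda)$, is continuously differentiable and concave on all of $\mathbb{R}$.
   Context: For $i=1,\dots,N$: $d_i\in\mathbb{R}$, $\mathcal{X}_i=[\underline{x}_i,\bar{x}_i]$ a nonempty closed interval, $f_i,\phi_i:\mathbb{R}\to\mathbb{R}$. Assumption 1: for each $i$, $f_i$ and $\phi_i$ are continuously differentiable, $f_i$ is strictly convex on $\mathcal{X}_i$, $\phi_i$ is convex on $\mathcal{X}_i$, and $\phi_i'(x_i)<1$ for all $x_i\in\mathcal{X}_i$. Assumption 2: $f_i'(x_i)>0$ for all $x_i\in\mathcal{X}_i$ and all $i$. Local Lagrangian: $\mathcal{L}^r_i(x_i,\lambda)=f_i(x_i)+\lambda\big(d_i-x_i+\phi_i(x_i)\big)$. Let $v_i(x_i)=f_i'(x_i)(1-\phi_i'(x_i))^{-1}$ on $\mathcal{X}_i$ (strictly increasing under the assumptions). Define for $\lambda\in\mathbb{R}$: $\hat{x}_i(\lambda)=\underline{x}_i$ if $\lambda\le v_i(\underline{x}_i)$; $\hat{x}_i(\lambda)=v_i^{-1}(\lambda)$ if $v_i(\underline{x}_i)<\lambda<v_i(\bar{x}_i)$; $\hat{x}_i(\lambda)=\bar{x}_i$ if $\lambda\ge v_i(\bar{x}_i)$. *)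

(* Defs.v *)
From Stdlib Require Import Reals Lra List ClassicalEpsilon.
Open Scope R_scope.

Definition convex_on (a b : R) (h : R -> R) : Prop :=
  forall x y t, a <= x <= b -> a <= y <= b -> 0 <= t <= 1 ->
    h (t * x + (1 - t) * y) <= t * h x + (1 - t) * h y.

Definition strictly_convex_on (a b : R) (h : R -> R) : Prop :=
  forall x y t, a <= x <= b -> a <= y <= b -> x <> y -> 0 < t < 1 ->
    h (t * x + (1 - t) * y) < t * h x + (1 - t) * h y.

Definition concave (g : R -> R) : Prop :=
  forall x y t, 0 <= t <= 1 ->
    t * g x + (1 - t) * g y <= g (t * x + (1 - t) * y).

Definition vfun (df dphi : R -> R) (x : R) : R := df x * / (1 - dphi x).

(* v^{-1}(lam): some x in [lo,hi] with v x = lam (unique when v is strictly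
   increasing on [lo,hi] and such x exists). *)
Definition vinv (lo hi : R) (v : R -> R) (lam : R) : R :=
  epsilon (inhabits lo) (fun x => lo <= x <= hi /\ v x = lam).

Definition xhat (lo hi : R) (v : R -> R) (lam : R) : R :=
  if Rle_dec lam (v lo) then lo
  else if Rlt_dec lam (v hi) then vinv lo hi v lam
  else hi.

Definition Lr (f phi : R -> R) (d x lam : R) : R :=
  f x + lam * (d - x + phi x).

Definition gim (f phi df dphi : R -> R) (d lo hi lam : R) : R :=
  Lr f phi d (xhat lo hi (vfun df dphi) lam) lam.

Definition gm (N : nat) (f phi df dphi : nat -> R -> R) (d lo hi : nat -> R)
  (lam : R) : R :=
  fold_right Rplus 0
    (map (fun i => gim (f i) (phi i) (df i) (dphi i) (d i) (lo i) (hi i) lam)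
         (seq 0 N)).

(* Main.v *)
Require Import Defs.
From Stdlib Require Import Reals Lra Psatz Lia List ClassicalEpsilon.
Open Scope R_scope.

Lemma grad_ineq (lo hi : R) (h dh : R -> R) :
  convex_on lo hi h -> (forall x, derivable_pt_lim h x (dh x)) ->
  forall x y, lo <= x <= hi -> lo <= y <= hi ->
  dh x * (y - x) <= h y - h x.
Proof.
  intros Hc Hd x y Hx Hy.
  destruct (Req_dec y x) as [E|E]. { subst; lra. }
  assert (Hyx : 0 < Rabs (y - x)) by (apply Rabs_pos_lt; lra).
  apply Rnot_lt_le; intro Hlt.
  set (gap := dh x * (y - x) - (h y - h x)).
  assert (Hgap : 0 < gap) by (unfold gap; lra).
  set (eps := gap / (2 * Rabs (y - x))).
  assert (Heps : 0 < eps) by (unfold eps; apply Rdiv_lt_0_compat; lra).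
  destruct (Hd x eps Heps) as [del Hdel].
  set (t := Rmin 1 (del / (2 * Rabs (y - x)))).
  assert (Ht0 : 0 < t).
  { unfold t; apply Rmin_pos; [lra|]. apply Rdiv_lt_0_compat; [apply cond_pos|lra]. }
  assert (Ht1 : t <= 1) by (unfold t; apply Rmin_l).
  assert (Htd : t * Rabs (y - x) < del).
  { assert (t <= del / (2 * Rabs (y - x))) by (unfold t; apply Rmin_r).
    pose proof (cond_pos del).
    apply Rle_lt_trans with (del / (2 * Rabs (y - x)) * Rabs (y - x)).
    - apply Rmult_le_compat_r; lra.
    - field_simplify; lra. }
  set (k := t * (y - x)).
  assert (Hk0 : k <> 0) by (unfold k; apply Rmult_integral_contrapositive; lra).
  assert (Hkd : Rabs k < del) by (unfold k; rewrite Rabs_mult, Rabs_pos_eq; lra).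
  specialize (Hdel k Hk0 Hkd).
  set (q := (h (x + k) - h x) / k) in Hdel.
  assert (Hconv : h (x + k) <= t * h y + (1 - t) * h x).
  { replace (x + k) with (t * y + (1 - t) * x) by (unfold k; ring).
    apply Hc; [exact Hy|exact Hx|lra]. }
  assert (Hkq : k * q = h (x + k) - h x) by (unfold q; field; auto).
  assert (Hq : (y - x) * q <= h y - h x).
  { assert (t * ((y - x) * q) <= t * (h y - h x)) by (replace (t * ((y - x) * q)) with (k * q) by (unfold k; ring); lra).
    apply Rmult_le_reg_l with t; lra. }
  assert (Hl : (y - x) * dh x <= (y - x) * q + Rabs (y - x) * eps).
  { apply Rabs_def2 in Hdel. destruct Hdel.
    destruct (Rle_dec 0 (y - x)).
    - rewrite Rabs_pos_eq by lra. nra.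
    - rewrite Rabs_left by lra. nra. }
  assert (Rabs (y - x) * eps = gap / 2) by (unfold eps; field; lra).
  unfold gap in *; lra.
Qed.

Lemma df_strict (lo hi : R) (f df : R -> R) :
  strictly_convex_on lo hi f -> (forall x, derivable_pt_lim f x (df x)) ->
  forall x y, lo <= x <= hi -> lo <= y <= hi -> x < y -> df x < df y.
Proof.
  intros Hc Hd x y Hx Hy Hxy.
  assert (Hcv : convex_on lo hi f).
  { intros a b t Ha Hb Ht.
    destruct (Req_dec a b) as [E|E].
    { subst. replace (t * b + (1 - t) * b) with b by ring. lra. }
    destruct (Req_dec t 0) as [E0|E0].
    { subst. replace (0 * a + (1 - 0) * b) with b by ring. lra. }
    destruct (Req_dec t 1) as [E1|E1].
    { subst. replace (1 * a + (1 - 1) * b) with a by ring. lra. }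
    left; apply Hc; auto; lra. }
  set (z := (x + y) / 2).
  assert (Hz : lo <= z <= hi) by (unfold z; lra).
  assert (Hfz : f z < / 2 * f x + (1 - / 2) * f y).
  { unfold z. replace ((x + y) / 2) with (/2 * x + (1 - /2) * y) by field.
    apply Hc; auto; lra. }
  pose proof (grad_ineq lo hi f df Hcv Hd x z Hx Hz).
  pose proof (grad_ineq lo hi f df Hcv Hd y z Hy Hz).
  unfold z in *. nra.
Qed.

Record Comp (f phi df dphi : R -> R) (lo hi : R) : Prop := {
  c_int : lo <= hi;
  c_df : forall x, derivable_pt_lim f x (df x);
  c_dfc : continuity df;
  c_dphi : forall x, derivable_pt_lim phi x (dphi x);
  c_dphic : continuity dphi;
  c_fconv : strictly_convex_on lo hi f;
  c_phiconv : convex_on lo hi phi;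
  c_dphi1 : forall x, lo <= x <= hi -> dphi x < 1;
  c_dfpos : forall x, lo <= x <= hi -> 0 < df x }.


Lemma v_strict f phi df dphi lo hi : Comp f phi df dphi lo hi ->
  forall x y, lo <= x <= hi -> lo <= y <= hi -> x < y -> vfun df dphi x < vfun df dphi y.
Proof.
  intros H x y Hx Hy Hxy. destruct H.
  pose proof (df_strict lo hi f df c_fconv0 c_df0 x y Hx Hy Hxy).
  pose proof (grad_ineq lo hi phi dphi c_phiconv0 c_dphi0 x y Hx Hy).
  pose proof (grad_ineq lo hi phi dphi c_phiconv0 c_dphi0 y x Hy Hx).
  assert (dphi x <= dphi y) by nra.
  pose proof (c_dphi2 x Hx). pose proof (c_dphi2 y Hy). pose proof (c_dfpos0 x Hx).
  unfold vfun.
  apply Rle_lt_trans with (df x * / (1 - dphi y)).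
  - apply Rmult_le_compat_l; [lra|]. apply Rinv_le_contravar; lra.
  - apply Rmult_lt_compat_r; [apply Rinv_0_lt_compat; lra | lra].
Qed.

Lemma v_cont f phi df dphi lo hi : Comp f phi df dphi lo hi ->
  forall x, lo <= x <= hi -> continuity_pt (vfun df dphi) x.
Proof.
  intros H x Hx. destruct H.
  change (continuity_pt (mult_fct df (inv_fct (minus_fct (fct_cte 1) dphi))) x).
  apply continuity_pt_mult; [apply c_dfc0|].
  apply continuity_pt_inv.
  - apply continuity_pt_minus; [apply continuity_pt_const; intros a b; reflexivity | apply c_dphic0].
  - unfold minus_fct, fct_cte. pose proof (c_dphi2 x Hx). lra.
Qed.

Lemma xh_spec f phi df dphi lo hi : Comp f phi df dphi lo hi ->
  forall lam, let x0 := xhat lo hi (vfun df dphi) lam in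
  lo <= x0 <= hi /\
  (forall x, lo <= x <= hi -> x < x0 -> vfun df dphi x < lam) /\
  (forall x, lo <= x <= hi -> x0 < x -> lam < vfun df dphi x).
Proof.
  intros H lam x0. pose proof (c_int _ _ _ _ _ _ H) as Hlh.
  pose proof (v_strict _ _ _ _ _ _ H) as Hs.
  unfold x0, xhat. set (v := vfun df dphi) in *.
  destruct (Rle_dec lam (v lo)) as [H1|H1].
  { split; [lra|split]; [intros; lra|]. intros x Hx Hlx. pose proof (Hs lo x ltac:(lra) Hx Hlx); lra. }
  destruct (Rlt_dec lam (v hi)) as [H2|H2].
  - assert (Hex : exists x, lo <= x <= hi /\ v x = lam).
    { assert (Hlt : lo < hi).
      { destruct Hlh as [|E]; auto. subst. lra. }
      destruct (Ranalysis5.IVT_interv (fun x => v x - lam) lo hi) as [z [Hz1 Hz2]]; auto.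
      - intros a Ha. apply continuity_pt_minus; [apply (v_cont _ _ _ _ _ _ H); auto|].
        apply continuity_pt_const; intros ? ?; reflexivity.
      - simpl; lra.
      - simpl; lra.
      - exists z; split; auto; lra. }
    pose proof (epsilon_spec (inhabits lo) _ Hex) as [Hr Hv].
    unfold vinv. set (e := epsilon _ _) in *.
    split; [auto|split].
    + intros x Hx Hxe. rewrite <- Hv. apply Hs; auto.
    + intros x Hx Hxe. rewrite <- Hv. apply Hs; auto.
  - split; [lra|split]; [|intros; lra].
    intros x Hx Hxh. pose proof (Hs x hi Hx ltac:(lra) Hxh); lra.
Qed.

Lemma L_deriv f phi df dphi d lam : (forall x, derivable_pt_lim f x (df x)) ->
  (forall x, derivable_pt_lim phi x (dphi x)) ->
  forall c, derivable_pt_lim (fun y => Lr f phi d y lam) c (df c + lam * (- 1 + dphi c)).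
Proof.
  intros Hf Hp c. unfold Lr.
  change (derivable_pt_lim (plus_fct f (mult_real_fct lam (plus_fct (minus_fct (fct_cte d) id) phi))) c (df c + lam * (- 1 + dphi c))).
  replace (- 1 + dphi c) with ((0 - 1) + dphi c) by ring.
  apply derivable_pt_lim_plus; [auto|].
  apply derivable_pt_lim_scal.
  apply derivable_pt_lim_plus; [|auto].
  apply derivable_pt_lim_minus; [apply derivable_pt_lim_const | apply derivable_pt_lim_id].
Qed.

Lemma minimizer f phi df dphi lo hi d : Comp f phi df dphi lo hi ->
  forall lam x, lo <= x <= hi ->
  Lr f phi d (xhat lo hi (vfun df dphi) lam) lam <= Lr f phi d x lam.
Proof.
  intros H lam x Hx.
  destruct (xh_spec _ _ _ _ _ _ H lam) as [Hr [Ha Hb]].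
  set (x0 := xhat lo hi (vfun df dphi) lam) in *.
  pose proof (L_deriv f phi df dphi d lam (c_df _ _ _ _ _ _ H) (c_dphi _ _ _ _ _ _ H)) as HD.
  assert (Hid : forall c, lo <= c <= hi ->
     df c + lam * (- 1 + dphi c) = (1 - dphi c) * (vfun df dphi c - lam)).
  { intros c Hc. pose proof (c_dphi1 _ _ _ _ _ _ H c Hc). unfold vfun. field. lra. }
  destruct (Rtotal_order x x0) as [Hlt|[E|Hgt]].
  - destruct (MVT_cor2 (fun y => Lr f phi d y lam) (fun y => df y + lam * (- 1 + dphi y)) x x0 Hlt)
      as [c [Hc1 Hc2]]; [intros; apply HD|].
    assert (Hcr : lo <= c <= hi) by lra.
    rewrite Hid in Hc1 by auto.
    pose proof (Ha c Hcr ltac:(lra)). pose proof (c_dphi1 _ _ _ _ _ _ H c Hcr).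
    assert (0 < (1 - dphi c) * (lam - vfun df dphi c)) by (apply Rmult_lt_0_compat; lra).
    nra.
  - subst; lra.
  - destruct (MVT_cor2 (fun y => Lr f phi d y lam) (fun y => df y + lam * (- 1 + dphi y)) x0 x Hgt)
      as [c [Hc1 Hc2]]; [intros; apply HD|].
    assert (Hcr : lo <= c <= hi) by lra.
    rewrite Hid in Hc1 by auto.
    pose proof (Hb c Hcr ltac:(lra)). pose proof (c_dphi1 _ _ _ _ _ _ H c Hcr).
    assert (0 < (1 - dphi c) * (vfun df dphi c - lam)) by (apply Rmult_lt_0_compat; lra).
    nra.
Qed.

Lemma compA f phi df dphi lo hi d : Comp f phi df dphi lo hi ->
  forall lam mu, gim f phi df dphi d lo hi mu <= gim f phi df dphi d lo hi lam +
    (mu - lam) * (d - xhat lo hi (vfun df dphi) lam + phi (xhat lo hi (vfun df dphi) lam)).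
Proof.
  intros H lam mu. unfold gim.
  destruct (xh_spec _ _ _ _ _ _ H lam) as [Hr _].
  pose proof (minimizer _ _ _ _ _ _ d H mu _ Hr).
  unfold Lr in *. lra.
Qed.

Lemma xh_cont f phi df dphi lo hi : Comp f phi df dphi lo hi ->
  continuity (xhat lo hi (vfun df dphi)).
Proof.
  intros H lam. set (xh := xhat lo hi (vfun df dphi)). set (v := vfun df dphi) in *.
  unfold continuity_pt, continue_in, limit1_in, limit_in. simpl. unfold R_dist.
  intros eps Heps.
  destruct (xh_spec _ _ _ _ _ _ H lam) as [Hr [Ha Hb]]. fold v xh in Hr, Ha, Hb.
  set (x0 := xh lam) in *.
  set (b := x0 + eps / 2). set (a := x0 - eps / 2).
  set (d1 := if Rle_dec b hi then v b - lam else 1).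
  set (d2 := if Rle_dec lo a then lam - v a else 1).
  assert (Hd1 : 0 < d1).
  { unfold d1; destruct (Rle_dec b hi); [|lra]. pose proof (Hb b ltac:(unfold b in *; lra) ltac:(unfold b; lra)); lra. }
  assert (Hd2 : 0 < d2).
  { unfold d2; destruct (Rle_dec lo a); [|lra]. pose proof (Ha a ltac:(unfold a in *; lra) ltac:(unfold a; lra)); lra. }
  exists (Rmin d1 d2). split; [apply Rmin_pos; auto|].
  intros mu [_ Hmu].
  assert (Hm1 : Rabs (mu - lam) < d1) by (eapply Rlt_le_trans; [exact Hmu| apply Rmin_l]).
  assert (Hm2 : Rabs (mu - lam) < d2) by (eapply Rlt_le_trans; [exact Hmu| apply Rmin_r]).
  apply Rabs_def2 in Hm1. apply Rabs_def2 in Hm2.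
  destruct (xh_spec _ _ _ _ _ _ H mu) as [Hr' [Ha' Hb']]. fold v xh in Hr', Ha', Hb'.
  assert (U : xh mu <= b).
  { unfold d1 in Hm1. destruct (Rle_dec b hi).
    - apply Rnot_lt_le; intro C. pose proof (Ha' b ltac:(unfold b in *; lra) C). lra.
    - lra. }
  assert (Lw : a <= xh mu).
  { unfold d2 in Hm2. destruct (Rle_dec lo a).
    - apply Rnot_lt_le; intro C. pose proof (Hb' a ltac:(unfold a in *; lra) C). lra.
    - lra. }
  unfold a, b in *. apply Rabs_def1; lra.
Qed.

Lemma C_cont f phi df dphi lo hi d : Comp f phi df dphi lo hi ->
  continuity (fun lam => d - xhat lo hi (vfun df dphi) lam + phi (xhat lo hi (vfun df dphi) lam)).
Proof.
  intros H lam.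
  pose proof (xh_cont _ _ _ _ _ _ H) as Hx.
  change (continuity_pt (plus_fct (minus_fct (fct_cte d) (xhat lo hi (vfun df dphi)))
     (comp phi (xhat lo hi (vfun df dphi)))) lam).
  apply continuity_pt_plus.
  - apply continuity_pt_minus; [apply continuity_pt_const; intros ? ?; reflexivity | apply Hx].
  - apply continuity_pt_comp; [apply Hx|].
    apply derivable_continuous_pt. exists (dphi (xhat lo hi (vfun df dphi) lam)).
    apply (c_dphi _ _ _ _ _ _ H).
Qed.

Lemma abs_deriv (G C : R -> R) :
  (forall lam mu, G mu <= G lam + (mu - lam) * C lam) -> continuity C ->
  forall lam, derivable_pt_lim G lam (C lam).
Proof.
  intros HA HC lam eps Heps.
  specialize (HC lam). unfold continuity_pt, continue_in, limit1_in, limit_in in HC.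
  simpl in HC. unfold R_dist in HC.
  destruct (HC eps Heps) as [al [Hal Hc]].
  exists (mkposreal al Hal). intros h Hh0 Hh. simpl in Hh.
  assert (Hcc : Rabs (C (lam + h) - C lam) < eps).
  { apply Hc. split; [split; [exact I|lra]|]. replace (lam + h - lam) with h by ring. exact Hh. }
  pose proof (HA lam (lam + h)) as A1.
  pose proof (HA (lam + h) lam) as A2.
  replace (lam + h - lam) with h in A1 by ring.
  replace (lam - (lam + h)) with (- h) in A2 by ring.
  apply Rabs_def2 in Hcc. destruct Hcc.
  set (q := (G (lam + h) - G lam) / h).
  assert (Hq : h * q = G (lam + h) - G lam) by (unfold q; field; auto).
  apply Rabs_def1.
  - destruct (Rlt_dec 0 h).
    + assert (h * q <= h * C lam) by lra. nra.
    + assert (h * C (lam + h) <= h * q) by lra. nra.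
  - destruct (Rlt_dec 0 h).
    + assert (h * C (lam + h) <= h * q) by lra. nra.
    + assert (h * q <= h * C lam) by lra. nra.
Qed.

Lemma abs_concave (G C : R -> R) :
  (forall lam mu, G mu <= G lam + (mu - lam) * C lam) -> concave G.
Proof.
  intros HA x y t Ht.
  set (z := t * x + (1 - t) * y).
  pose proof (HA z x). pose proof (HA z y).
  assert (t * G x <= t * (G z + (x - z) * C z)) by (apply Rmult_le_compat_l; lra).
  assert ((1 - t) * G y <= (1 - t) * (G z + (y - z) * C z)) by (apply Rmult_le_compat_l; lra).
  assert (t * (G z + (x - z) * C z) + (1 - t) * (G z + (y - z) * C z) = G z)
    by (unfold z; ring).
  lra.
Qed.

Lemma list_sum (G C : nat -> R -> R) (l : list nat) :
  (forall i, In i l -> (forall lam mu, G i mu <= G i lam + (mu - lam) * C i lam) /\ continuity (C i)) ->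
  (forall lam mu, fold_right Rplus 0 (map (fun i => G i mu) l) <=
      fold_right Rplus 0 (map (fun i => G i lam) l) + (mu - lam) * fold_right Rplus 0 (map (fun i => C i lam) l))
  /\ continuity (fun lam => fold_right Rplus 0 (map (fun i => C i lam) l)).
Proof.
  induction l as [|j l IH]; intros H.
  - simpl. split; [intros; lra|]. intros x. apply continuity_pt_const; intros ? ?; reflexivity.
  - destruct IH as [IH1 IH2]; [intros; apply H; right; auto|].
    destruct (H j (or_introl eq_refl)) as [H1 H2].
    simpl. split.
    + intros lam mu. specialize (IH1 lam mu). specialize (H1 lam mu). nra.
    + change (continuity (plus_fct (C j) (fun lam => fold_right Rplus 0 (map (fun i => C i lam) l)))).
      apply continuity_plus; auto.
Qed.

Theorem lemma3 (N : nat) (f phi df dphi : nat -> R -> R) (d lo hi : nat -> R)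
  (Hint : forall i, (i < N)%nat -> lo i <= hi i)
  (Hdf : forall i, (i < N)%nat -> forall x, derivable_pt_lim (f i) x (df i x))
  (Hdfc : forall i, (i < N)%nat -> continuity (df i))
  (Hdphi : forall i, (i < N)%nat -> forall x, derivable_pt_lim (phi i) x (dphi i x))
  (Hdphic : forall i, (i < N)%nat -> continuity (dphi i))
  (Hfconv : forall i, (i < N)%nat -> strictly_convex_on (lo i) (hi i) (f i))
  (Hphiconv : forall i, (i < N)%nat -> convex_on (lo i) (hi i) (phi i))
  (Hdphi1 : forall i, (i < N)%nat -> forall x, lo i <= x <= hi i -> dphi i x < 1)
  (Hdfpos : forall i, (i < N)%nat -> forall x, lo i <= x <= hi i -> 0 < df i x) :
  (exists dg : R -> R,
      (forall lam, derivable_pt_lim (gm N f phi df dphi d lo hi) lam (dg lam))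
      /\ continuity dg)
  /\ concave (gm N f phi df dphi d lo hi).
Proof.
  set (G := fun i lam => gim (f i) (phi i) (df i) (dphi i) (d i) (lo i) (hi i) lam).
  set (C := fun i lam => d i - xhat (lo i) (hi i) (vfun (df i) (dphi i)) lam
                         + phi i (xhat (lo i) (hi i) (vfun (df i) (dphi i)) lam)).
  destruct (list_sum G C (seq 0 N)) as [HA HC].
  { intros i Hi. apply in_seq in Hi.
    assert (Hi' : (i < N)%nat) by lia.
    assert (Hc : Comp (f i) (phi i) (df i) (dphi i) (lo i) (hi i)) by (constructor; auto).
    split.
    - intros lam mu. apply (compA _ _ _ _ _ _ (d i) Hc).
    - apply (C_cont _ _ _ _ _ _ (d i) Hc). }
  split.
  - eexists. split; [|exact HC]. intros lam. apply (abs_deriv _ _ HA HC).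
  - apply (abs_concave _ _ HA).
Qed.
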